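(* Let $n\ge1$ and let $M$ be the set of maps $\mu:\{2,\dots,n+1\}\to\{1,\dots,n\}$ with $\mu(2)=1$ and $\mu(j)<j$ for all $j$. For each $\mu\in M$ there is a finite sequence of acceptable moves which transforms $\mu$ into an element of $M$ in upper echelon form.
   Context: An acceptable move on $\mu\in M$: if for some $j\in\{2,\dots,n\}$ one has $\mu(j+1)<\mu(j)$, replace $\mu$ by $(j,j+1)\circ\mu\circ(j,j+1)$, where $(j,j+1)$ is the transposition of $j$ and $j+1$. (Graphically, $\mu$ marks the entry $B_{\mu(m),m}$ in column $m$ of an upper triangular $n\times n$ array with rows $1,\dots,n$ and columns $2,\dots,n+1$; a move swaps the marked entries of columns $j$ and $j+1$ and simultaneously of rows $j$ and $j+1$.) $\mu$ is in upper echelon form if every marked entry in a higher row lies to the left of every marked entry in a lower row, i.e. $\mu(m)<\mu(m')$ implies $m<m'$ (equivalently, $\mu$ is nondecreasing). *)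

(* Defs.v *)
From mathcomp Require Import all_boot.
Set Implicit Arguments. Unset Strict Implicit. Unset Printing Implicit Defensive.

(* A map mu : {2,...,n+1} -> {1,...,n} is represented by a function nat -> nat;
   only its values on the domain {2,...,n+1} matter (all notions below only
   look at those values, and moves preserve the domain). *)

Definition in_M (n : nat) (mu : nat -> nat) : Prop :=
  mu 2 = 1 /\
  (forall j, 2 <= j <= n.+1 -> 1 <= mu j <= n) /\
  (forall j, 2 <= j <= n.+1 -> mu j < j).

Definition transp (j : nat) (x : nat) : nat :=
  if x == j then j.+1 else if x == j.+1 then j else x.

Definition acceptable_move (n : nat) (mu nu : nat -> nat) : Prop :=
  exists j, [/\ 2 <= j <= n, mu j.+1 < mu j & nu = transp j \o mu \o transp j].

Inductive moves (n : nat) : (nat -> nat) -> (nat -> nat) -> Prop :=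
| moves_refl mu : moves n mu mu
| moves_step mu nu rho : acceptable_move n mu nu -> moves n nu rho -> moves n mu rho.

Definition upper_echelon (n : nat) (mu : nat -> nat) : Prop :=
  forall m m', 2 <= m <= n.+1 -> 2 <= m' <= n.+1 -> mu m < mu m' -> m < m'.

(* Main.v *)
Require Import Defs.
From mathcomp Require Import all_boot.
From mathcomp Require Import zify.

Definition encF (B : nat) := fun acc a => acc * B + a.

Lemma foldl_lt B s t a b : size s = size t -> all (fun x => x < B) s ->
  all (fun x => x < B) t -> a < b -> foldl (encF B) a s < foldl (encF B) b t.
Proof.
elim: s t a b => [|x s IH] [|y t] a b //= [] Hs /andP[Hx Hs'] /andP[Hy Ht] Hab.
apply: IH => //; rewrite /encF; nia.
Qed.

Lemma transp_id j x : x != j -> x != j.+1 -> transp j x = x.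
Proof. by rewrite /transp => /negbTE -> /negbTE ->. Qed.

Lemma move_dec n mu j : in_M n mu -> 2 <= j <= n -> mu j.+1 < mu j ->
  in_M n (transp j \o mu \o transp j) /\
  foldl (encF n.+1) 0 (map (transp j \o mu \o transp j) (iota 2 n)) <
  foldl (encF n.+1) 0 (map mu (iota 2 n)).
Proof.
move=> [H2 [Hr Hl]] Hj Hlt.
have Hj1 := Hr j.+1; have Hj0 := Hr j; have Hl1 := Hl j.+1; have Hl0 := Hl j.
have Hj3 : j != 2.
  apply/eqP => E; subst j; rewrite H2 in Hlt; have A : 2 <= 3 <= n.+1 by lia.
  have := Hj1 A; lia.
have Hpre : forall x, 2 <= x < j -> (transp j \o mu \o transp j) x = mu x.
  move=> x Hx /=; rewrite (@transp_id j x); try (apply/eqP; lia).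
  have Hx' : 2 <= x <= n.+1 by lia.
  have := Hl x Hx' => Hm; rewrite transp_id //; apply/eqP; lia.
split.
  split; [|split].
  - rewrite /= (@transp_id j 2); try (apply/eqP; lia).
    by rewrite H2 (@transp_id j 1) //; apply/eqP; lia.
  - move=> x Hx /=.
    have A1 : 2 <= j.+1 <= n.+1 by lia.
    have A0 : 2 <= j <= n.+1 by lia.
    have := Hj1 A1; have := Hj0 A0; have := Hl1 A1; have := Hl0 A0.
    have := Hr x Hx; have := Hl x Hx.
    rewrite /transp.
    case: (x =P j) => ?; [subst|case: (x =P j.+1) => ?; [subst|]];
    repeat match goal with |- context[if ?a == ?b then _ else _] =>
      case: (a =P b) => ? end; lia.
  - move=> x Hx /=.
    have A1 : 2 <= j.+1 <= n.+1 by lia.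
    have A0 : 2 <= j <= n.+1 by lia.
    have := Hj1 A1; have := Hj0 A0; have := Hl1 A1; have := Hl0 A0.
    have := Hr x Hx; have := Hl x Hx.
    rewrite /transp.
    case: (x =P j) => ?; [subst|case: (x =P j.+1) => ?; [subst|]];
    repeat match goal with |- context[if ?a == ?b then _ else _] =>
      case: (a =P b) => ? end; lia.
have -> : iota 2 n = iota 2 (j-2) ++ iota (2 + (j-2)) (n - (j-2)).
  by rewrite -iotaD subnKC //; lia.
have -> : 2 + (j-2) = j by lia.
have -> : n - (j-2) = (n.+1 - j).+1 by lia.
rewrite !map_cat !foldl_cat /=.
have -> : map (transp j \o mu \o transp j) (iota 2 (j-2)) = map mu (iota 2 (j-2)).
  apply/eq_in_map => x; rewrite mem_iota => Hx; apply: Hpre; lia.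
apply: foldl_lt.
- by rewrite !size_map.
- rewrite all_map; apply/allP => x; rewrite mem_iota => Hx /=.
  have Hx' : 2 <= transp j x <= n.+1 by rewrite /transp; case: (x =P j) => _; [|case: (x =P j.+1) => _]; lia.
  have := Hl _ Hx'; have := Hr _ Hx'.
  have A1 : 2 <= j.+1 <= n.+1 by lia.
  have := Hj1 A1.
  rewrite /transp; case: (x =P j) => ?; [subst|case: (x =P j.+1) => ?; [subst|]];
  repeat match goal with |- context[if ?a == ?b then _ else _] =>
      case: (a =P b) => ? end; subst; lia.
- rewrite all_map; apply/allP => x; rewrite mem_iota => Hx /=.
  have Hx' : 2 <= x <= n.+1 by lia.
  have := Hr _ Hx'; lia.
- rewrite /encF /=.
  have A1 : 2 <= j.+1 <= n.+1 by lia.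
  have A0 : 2 <= j <= n.+1 by lia.
  have := Hj1 A1; have := Hj0 A0; have := Hl1 A1; have := Hl0 A0.
  rewrite /transp eqxx.
  repeat match goal with |- context[if ?a == ?b then _ else _] =>
      case: (a =P b) => ? end; subst; lia.
Qed.

Lemma echelon_of n mu : (forall j, 2 <= j <= n -> mu j <= mu j.+1) -> upper_echelon n mu.
Proof.
move=> H.
have K : forall k m, 2 <= m -> m + k <= n.+1 -> mu m <= mu (m + k).
  elim=> [|k IH] m Hm Hk; first by rewrite addn0.
  apply: leq_trans (IH m Hm _) _; first lia.
  rewrite addnS; apply: H; lia.
move=> m m' Hm Hm' Hlt; case: (ltnP m m') => // Hle.
have := K (m - m') m' _ _; rewrite subnKC //; try lia.
Qed.

Theorem lemma3p2 (n : nat) (mu : nat -> nat) :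
  1 <= n -> in_M n mu ->
  exists nu, moves n mu nu /\ in_M n nu /\ upper_echelon n nu.
Proof.
move=> Hn.
suff: forall k mu, foldl (encF n.+1) 0 (map mu (iota 2 n)) < k -> in_M n mu ->
  exists nu, moves n mu nu /\ in_M n nu /\ upper_echelon n nu.
  by move=> /(_ _ mu (ltnSn _)).
elim=> [|k IH] {}mu // Hk HM.
case: (boolP (has (fun j => mu j.+1 < mu j) (iota 2 n.-1))) => Hh.
  case/hasP: Hh => j; rewrite mem_iota => Hj Hlt.
  have Hj' : 2 <= j <= n by lia.
  have [HM' Hd] := @move_dec n mu j HM Hj' Hlt.
  have [nu [Hm [Hi Hu]]] := IH _ (leq_trans Hd Hk) HM'.
  exists nu; split => //; apply: moves_step Hm.
  by exists j; split.
exists mu; split; first exact: moves_refl.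
split => //; apply: echelon_of => j Hj.
rewrite leqNgt; apply/negP => Hlt; move/negP: Hh; apply.
by apply/hasP; exists j => //; rewrite mem_iota; lia.
Qed.
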